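(* Let $\mathfrak g$ be of type $B_n$ and $J\subseteq I$. Then for $s\ge1$, $\mathbf A_{s,J}=\mathbf A^{1,1}_{s,J}\sqcup\mathbf A^{1,2}_{s,J}\sqcup\mathbf A^{2}_{s,J}$ where $$\mathbf A^{1,1}_{s,J}=\{\{\beta_{i_k,j_k}\}_{1\le k\le s}\in\mathbf A^1_s:\ i_k,j_k\notin J\ \forall k\},$$ $$\mathbf A^{1,2}_{s,J}=\{\{\beta_{i_k,j_k}\}_{1\le k\le s}\in\mathbf A^1_s:\ \{\beta_{i_k,j_k}\}_{1\le k\le s-1}\in\mathbf A^{1,1}_{s-1,J},\ i_s\in J,\ j_s=i_s+1\notin J\},$$ and, if $1\notin J$, $$\mathbf A^{2}_{s,J}=\{\{\alpha_{1,\ell}\}\cup\{\beta_{i_k,j_k}\}_{1\le k\le s-1}\in\mathbf A^2_s:\ \ell\notin J,\ \{\beta_{i_k,j_k}\}_{1\le k\le s-1}\in\mathbf A^{1,1}_{s-1,J}\sqcup\mathbf A^{1,2}_{s-1,J}\},$$ while $\mathbf A^2_{s,J}=\emptyset$ if $1\in J$.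
   Context: Simple roots $\alpha_1,\dots,\alpha_n$ of $B_n$ numbered as in Bourbaki, $I=\{1,\dots,n\}$; $\alpha_{i,j}=\alpha_i+\dots+\alpha_j$ ($i\le j$), $\beta_{k,\ell}=\alpha_{k,n}+\alpha_{\ell,n}$ ($k<\ell$), $\theta=\beta_{1,2}$. $\mathbf A^1_s=\{\{\beta_{i_k,j_k}\}_{1\le k\le s}: i_1<\dots<i_s<j_s<\dots<j_1\}$ and $\mathbf A^2_s=\{\{\alpha_{1,\ell}\}\cup\{\beta_{i_k,j_k}\}_{1\le k\le s-1}: \{\beta_{i_k,j_k}\}\in\mathbf A^1_{s-1},\ i_1>1,\ j_1\le\ell\}$; these together are all abelian antichains with $s$ elements. For $\eta=\sum_i d_i(\eta)\alpha_i$, $R^+(J)=\{\alpha\in R^+:d_i(\alpha)=0\ \forall i\notin J\}$. A $J$-antichain is a subset $A\subseteq R^+$ with $A\cap R^+(J)=\emptyset$, distinct elements pairwise incomparable (order: $\lambda\le\mu$ iff $\mu-\lambda$ is a nonnegative integer combination of simple roots), and $\alpha-\alpha_j\notin R$ for $\alpha\in A$, $j\in J$. $\Phi(A)=\{\alpha\in R^+:\alpha\ge\beta$ for some $\beta\in A\}$; $A$ is abelian if $\beta_1+\beta_2\notin R$ for all $\beta_1,\beta_2\in\Phi(A)$. $\mathbf A_{s,J}$ is the set of abelian $J$-antichains with $s$ elements; for $s=0$ the sets $\mathbf A^{1,1}_{0,J}$ consist of the empty antichain and $\mathbf A^{1,2}_{0,J}=\emptyset$. *)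

(* Defs.v *)
From HB Require Import structures.
From mathcomp Require Import all_boot all_order all_algebra.
Set Implicit Arguments. Unset Strict Implicit. Unset Printing Implicit Defensive.
Import Order.TTheory GRing.Theory Num.Theory.
Local Open Scope ring_scope.

(* Elements of the root lattice of B_n, written in the basis of simple roots:
   v i = d_{i+1}(v)  (ordinal i : 'I_n stands for the Bourbaki index i+1). *)
Definition vec (n : nat) := {ffun 'I_n -> int}.

Definition alpha (n i j : nat) : vec n :=
  [ffun k : 'I_n => if ((i <= k.+1) && (k.+1 <= j))%N then 1 else 0].

Definition beta (n k l : nat) : vec n := alpha n k n + alpha n l n.

Definition simple (n : nat) (j : 'I_n) : vec n := alpha n j.+1 j.+1.

Definition posroots (n : nat) : seq (vec n) :=
  [seq alpha n i j | i <- iota 1 n, j <- iota i (n - i).+1] ++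
  [seq beta n k l | k <- iota 1 n, l <- iota k.+1 (n - k)].

Definition roots (n : nat) : seq (vec n) :=
  posroots n ++ map (fun v => - v) (posroots n).

(* lambda <= mu iff mu - lambda ii a nonnegative integer combination of simple roots *)
Definition rle (n : nat) (u v : vec n) : bool := [forall i, u i <= v i].

Definition inJ (n : nat) (J : {set 'I_n}) (i : nat) : bool :=
  [exists k in J, k.+1 == i]%N.

Definition inRJ (n : nat) (J : {set 'I_n}) (a : vec n) : bool :=
  (a \in posroots n) && [forall i, (i \notin J) ==> (a i == 0)].

Definition J_antichain (n : nat) (J : {set 'I_n}) (A : seq (vec n)) : Prop :=
  [/\ {subset A <= posroots n},
      (forall a, a \in A -> ~~ inRJ J a),
      (forall a b, a \in A -> b \in A -> a != b -> ~~ rle a b) &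
      (forall a j, a \in A -> j \in J -> (a - simple j) \notin roots n)].

Definition Phi (n : nat) (A : seq (vec n)) : seq (vec n) :=
  [seq a <- posroots n | has (fun b => rle b a) A].

Definition abelian_set (n : nat) (A : seq (vec n)) : Prop :=
  forall b1 b2, b1 \in Phi A -> b2 \in Phi A -> (b1 + b2) \notin roots n.

Definition inAsJ (n : nat) (J : {set 'I_n}) (s : nat) (A : seq (vec n)) : Prop :=
  [/\ uniq A, size A = s, J_antichain J A & abelian_set A].

(* index data (i_1,..,i_s), (j_1,..,j_s) with 1 <= i_1<..<i_s<j_s<..<j_1 <= n *)
Definition chain1 (n s : nat) (ii jj : seq nat) : bool :=
  [&& size ii == s, size jj == s, sorted ltn (ii ++ rev jj)
    & all (fun x => (1 <= x <= n)%N) (ii ++ jj)].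

Definition betas (n : nat) (ii jj : seq nat) : seq (vec n) :=
  [seq beta n x.1 x.2 | x <- zip ii jj].

Definition inA1 (n s : nat) (A : seq (vec n)) : Prop :=
  exists ii jj, chain1 n s ii jj /\ A =i betas n ii jj.

Definition cond11 (n : nat) (J : {set 'I_n}) (ii jj : seq nat) : bool :=
  all (fun x => ~~ inJ J x) (ii ++ jj).

Definition cond12 (n : nat) (J : {set 'I_n}) (s : nat) (ii jj : seq nat) : bool :=
  [&& (0 < s)%N, cond11 J (take s.-1 ii) (take s.-1 jj),
      inJ J (last 0%N ii), last 0%N jj == (last 0%N ii).+1
    & ~~ inJ J (last 0%N jj)].

Definition inA11 (n : nat) (J : {set 'I_n}) (s : nat) (A : seq (vec n)) : Prop :=
  exists ii jj, [/\ chain1 n s ii jj, A =i betas n ii jj & cond11 J ii jj].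

Definition inA12 (n : nat) (J : {set 'I_n}) (s : nat) (A : seq (vec n)) : Prop :=
  exists ii jj, [/\ chain1 n s ii jj, A =i betas n ii jj & cond12 J s ii jj].

Definition inA2 (n s : nat) (A : seq (vec n)) : Prop :=
  exists l ii jj, [/\ (0 < s)%N, (1 <= l <= n)%N, chain1 n s.-1 ii jj,
    (0 < s.-1)%N ==> ((1 < head 0 ii) && (head 0 jj <= l))%N
    & A =i alpha n 1 l :: betas n ii jj].

Definition inA2J (n : nat) (J : {set 'I_n}) (s : nat) (A : seq (vec n)) : Prop :=
  ~~ inJ J 1 /\
  exists l ii jj, [/\ (0 < s)%N, (1 <= l <= n)%N, chain1 n s.-1 ii jj,
    (0 < s.-1)%N ==> ((1 < head 0 ii) && (head 0 jj <= l))%N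
    & A =i alpha n 1 l :: betas n ii jj] /\
    ~~ inJ J l /\ (cond11 J ii jj || cond12 J s.-1 ii jj).

(* Main.v *)
Require Import Defs.
From HB Require Import structures.
From mathcomp Require Import all_boot all_order all_algebra.
From Stdlib Require Import Lia.
Import Defs.
Set Implicit Arguments. Unset Strict Implicit. Unset Printing Implicit Defensive.
Import Order.TTheory GRing.Theory Num.Theory.
Open Scope ring_scope.

Lemma alphaE n i j (k : 'I_n) :
  alpha n i j k = (if (i <= k.+1)%N && (k.+1 <= j)%N then 1 else 0)%R.
Proof. by rewrite /alpha ffunE. Qed.

Lemma betaE n i j (k : 'I_n) :
  beta n i j k = ((if (i <= k.+1)%N then 1 else 0) + (if (j <= k.+1)%N then 1 else 0))%R.
Proof. by rewrite /beta !ffunE (ltn_ord k) !andbT. Qed.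

Lemma simpleE n (j k : 'I_n) :
  simple j k = (if (j.+1 <= k.+1)%N && (k.+1 <= j.+1)%N then 1 else 0)%R.
Proof. by rewrite /simple alphaE. Qed.

Lemma ex_ord n x : (1 <= x)%N -> (x <= n)%N -> exists k : 'I_n, k.+1 = x.
Proof.
move=> h1 h2. have hk : (x.-1 < n)%N by rewrite prednK.
by exists (Ordinal hk) => /=; rewrite prednK.
Qed.

Ltac tolia := repeat match goal with
 | H : is_true (leq _ _) |- _ => apply (elimT ssrnat.leP) in H
 | H : is_true (_ && _) |- _ => apply (elimT andP) in H; destruct H
 | H : is_true (@eq_op _ (_ : nat) _) |- _ => apply (elimT eqP) in H
 | H : is_true (~~ (leq _ _)) |- _ => rewrite -ltnNge in H
 end.

Ltac csplit := repeat match goal with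
 | |- context [ (?a <= ?b)%N ] => let H := fresh "H" in case: (leqP a b) => H
 end.

Ltac ordb := repeat match goal with k : ordinal ?n |- _ =>
  lazymatch goal with _ : is_true (leq (S (nat_of_ord k)) n) |- _ => fail | _ => have := ltn_ord k; intro end end.

Ltac crunch := rewrite ?alphaE ?betaE ?simpleE ?ffunE; csplit => //=; ordb; tolia; try lia.



Ltac nat2lia := repeat rewrite <- plusE in *; repeat rewrite <- minusE in *.
Ltac arith := tolia; try apply/ssrnat.leP; nat2lia; lia.

Lemma posrootsP n (v : vec n) : v \in posroots n <->
  (exists i j, [/\ (1 <= i)%N, (i <= j)%N, (j <= n)%N & v = alpha n i j]) \/
  (exists k l, [/\ (1 <= k)%N, (k < l)%N, (l <= n)%N & v = beta n k l]).
Proof.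
rewrite /posroots mem_cat; split.
  case/orP=> /allpairsPdep [i [j [hi hj ->]]]; move: hi hj; rewrite !mem_iota => hi hj.
    by left; exists i, j; split => //; arith.
  by right; exists i, j; split => //; arith.
case=> [[i [j [h1 h2 h3 ->]]]|[i [j [h1 h2 h3 ->]]]]; apply/orP.
  left; apply/allpairsPdep; exists i, j; rewrite !mem_iota /=; split => //;
   apply/andP; split; arith.
right; apply/allpairsPdep; exists i, j; rewrite !mem_iota /=; split => //;
  apply/andP; split; arith.
Qed.

Lemma rootsP n (v : vec n) : v \in roots n <-> v \in posroots n \/ - v \in posroots n.
Proof.
rewrite /roots mem_cat; split.
  case/orP=> [h|/mapP [w hw ->]]; [by left|by right; rewrite opprK].
case=> h; apply/orP; [by left|right]; apply/mapP; exists (- v) => //; by rewrite opprK.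
Qed.

Lemma root_shapes n (v : vec n) : v \in roots n ->
  (exists i j, [/\ (1 <= i)%N, (i <= j)%N, (j <= n)%N & v = alpha n i j \/ v = - alpha n i j]) \/
  (exists k l, [/\ (1 <= k)%N, (k < l)%N, (l <= n)%N & v = beta n k l \/ v = - beta n k l]).
Proof.
case/rootsP=> /posrootsP [[i [j [h1 h2 h3 E]]]|[i [j [h1 h2 h3 E]]]].
- by left; exists i, j; split => //; left.
- by right; exists i, j; split => //; left.
- by left; exists i, j; split => //; right; rewrite -E opprK.
- by right; exists i, j; split => //; right; rewrite -E opprK.
Qed.


Ltac shapes H := case/root_shapes: H => [[? [? [? ? ? [->| ->]]]]|[? [? [? ? ? [->| ->]]]]].

Lemma root_le2 n (v : vec n) k : v \in roots n -> v k <= 2.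
Proof. move=> H; shapes H; crunch. Qed.

Lemma root_first n (v : vec n) (k : 'I_n) : k = 0%N :> nat -> v \in roots n -> v k <= 1.
Proof. move=> hk H; shapes H; crunch. Qed.

Lemma root_mixed n (v : vec n) x y : v \in roots n -> 0 < v x -> v y < 0 -> False.
Proof. move=> H; shapes H; crunch. Qed.

Lemma root_gap n (v : vec n) (x y z : 'I_n) : v \in roots n -> (x < y)%N -> (y < z)%N ->
  0 < v x -> 0 < v z -> v y = 0 -> False.
Proof. move=> H; shapes H; move=> hxy hyz; crunch. Qed.

Lemma root_two n (v : vec n) (x y : 'I_n) : v \in roots n -> (x < y)%N ->
  v x = 2 -> v y = 1 -> False.
Proof. move=> H; shapes H; move=> hxy; crunch. Qed.

Lemma root_jump n (v : vec n) (x y : 'I_n) : v \in roots n -> y = x.+1 :> nat ->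
  v x = 0 -> v y = 2 -> False.
Proof. move=> H; shapes H; move=> hxy; crunch. Qed.

Lemma alpha_pos n i j : (1 <= i)%N -> (i <= j)%N -> (j <= n)%N -> alpha n i j \in posroots n.
Proof. by move=> *; apply/posrootsP; left; exists i, j. Qed.

Lemma beta_pos n i j : (1 <= i)%N -> (i < j)%N -> (j <= n)%N -> beta n i j \in posroots n.
Proof. by move=> *; apply/posrootsP; right; exists i, j. Qed.

Lemma pos_roots n (v : vec n) : v \in posroots n -> v \in roots n.
Proof. by move=> h; apply/rootsP; left. Qed.

Ltac vecext := apply/ffunP => ?; rewrite ?ffunE; crunch.

Lemma W1 n i p : (1 < i)%N -> (i <= p)%N -> (p < n)%N ->
  alpha n 1 p + beta n i p.+1 = beta n 1 i.
Proof. move=> *; vecext. Qed.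

Lemma W4 n i j (m : 'I_n) : (i < j)%N -> (j < n)%N -> m.+1 = j ->
  beta n i j - simple m = beta n i j.+1.
Proof. move=> *; vecext. Qed.

Lemma W5 n i (m : 'I_n) : (i < n)%N -> m.+1 = n ->
  beta n i n - simple m = alpha n i n.
Proof. move=> *; vecext. Qed.

Lemma W6 n i j (m : 'I_n) : m.+1 = i -> (i.+1 < j)%N ->
  beta n i j - simple m = beta n i.+1 j.
Proof. move=> *; vecext. Qed.

Lemma W7 n l (m : 'I_n) : m.+1 = 1%N -> (2 <= l)%N ->
  alpha n 1 l - simple m = alpha n 2 l.
Proof. move=> *; vecext. Qed.

Lemma W8 n l (m : 'I_n) : m.+1 = l.+1 -> (1 <= l)%N ->
  alpha n 1 l.+1 - simple m = alpha n 1 l.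
Proof. move=> *; vecext. Qed.

Ltac rleT := apply/forallP => ?; crunch.

Lemma rle_aa n i j i' j' : (i' <= i)%N -> (j <= j')%N -> rle (alpha n i j) (alpha n i' j').
Proof. move=> *; rleT. Qed.

Lemma rle_ab n i j : rle (alpha n i j) (beta n i j.+1).
Proof. rleT. Qed.

Lemma rle_bb n i j i' j' : (i' <= i)%N -> (j' <= j)%N -> rle (beta n i j) (beta n i' j').
Proof. move=> *; rleT. Qed.

Lemma rle_a1b1 n l j : rle (alpha n 1 l) (beta n 1 j).
Proof. rleT. Qed.

Ltac nrle k := apply/negP => /forallP /(_ k); crunch.

Lemma nrle_ab n l i j : (1 < i)%N -> (i < j)%N -> (1 <= l)%N -> (1 <= n)%N -> ~~ rle (alpha n 1 l) (beta n i j).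
Proof. move=> h1 h0 h2 h3; have [k hk] := @ex_ord n 1 isT h3; nrle k. Qed.

Lemma nrle_ba n l i j : (i < j)%N -> (j <= l)%N -> (j <= n)%N -> ~~ rle (beta n i j) (alpha n 1 l).
Proof.
move=> h1 h2 h3; have [k hk] : exists k : 'I_n, k.+1 = j by apply: ex_ord; arith.
nrle k.
Qed.

Lemma nrle_bb1 n i j i' j' : (1 <= i)%N -> (i < i')%N -> (i' < j')%N -> (i < j)%N -> (j <= n)%N ->
  ~~ rle (beta n i j) (beta n i' j').
Proof.
move=> *; have [k hk] : exists k : 'I_n, k.+1 = i by apply: ex_ord; arith.
nrle k.
Qed.

Lemma nrle_bb2 n i j i' j' : (i < i')%N -> (i' < j')%N -> (j' < j)%N -> (j <= n)%N ->
  ~~ rle (beta n i' j') (beta n i j).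
Proof.
move=> *; have [k hk] : exists k : 'I_n, k.+1 = j' by apply: ex_ord; arith.
nrle k.
Qed.

Lemma beta_inj n i j i' j' : (1 <= i)%N -> (i < j)%N -> (j <= n)%N ->
  (1 <= i')%N -> (i' < j')%N -> (j' <= n)%N ->
  beta n i j = beta n i' j' -> i = i' /\ j = j'.
Proof.
move=> h1 h2 h3 h4 h5 h6 E.
have Hi : i = i'.
  case: (ltngtP i i') => // h.
    have [k hk] : exists k : 'I_n, k.+1 = i by apply: ex_ord; arith.
    have := congr1 (fun f : vec n => f k) E; crunch.
  have [k hk] : exists k : 'I_n, k.+1 = i' by apply: ex_ord; arith.
  have := congr1 (fun f : vec n => f k) E; crunch.
split => //; subst i'.
case: (ltngtP j j') => // h.
  have [k hk] : exists k : 'I_n, k.+1 = j by apply: ex_ord; arith.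
  have := congr1 (fun f : vec n => f k) E; crunch.
have [k hk] : exists k : 'I_n, k.+1 = j' by apply: ex_ord; arith.
have := congr1 (fun f : vec n => f k) E; crunch.
Qed.

Lemma alpha_ne_beta n l i j : (i < j)%N -> (j <= n)%N -> (l <= n)%N -> alpha n 1 l != beta n i j.
Proof.
move=> *; apply/eqP => E.
have [k hk] : exists k : 'I_n, k.+1 = n by apply: ex_ord; arith.
have := congr1 (fun f : vec n => f k) E; crunch.
Qed.

Lemma dom_a n l (b : vec n) (k : 'I_n) : rle (alpha n 1 l) b -> (k.+1 <= l)%N -> 1 <= b k.
Proof. move=> /forallP /(_ k); crunch. Qed.

Lemma dom_b n i j (b : vec n) (k : 'I_n) : rle (beta n i j) b -> (j <= k.+1)%N -> (i < j)%N -> 2 <= b k.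
Proof. move=> /forallP /(_ k); crunch. Qed.
Close Scope ring_scope.

Fixpoint nest (ii jj : seq nat) : Prop :=
  match ii, jj with
  | x :: ii', y :: jj' => (x < y)%N /\ (forall z, z \in ii' ++ jj' -> (x < z < y)%N) /\ nest ii' jj'
  | [::], [::] => True
  | _, _ => False
  end.

Lemma sorted_rcons_ltn M y : sorted ltn (rcons M y) = all (fun z => z < y) M && sorted ltn M.
Proof.
rewrite -[rcons M y]revK rev_sorted rev_rcons /= path_sortedE; last first.
  by move=> a b c /= h1 h2; apply: ltn_trans h2 h1.
by rewrite all_rev rev_sorted.
Qed.

Lemma sorted_cons2 x y ii jj : sorted ltn ((x :: ii) ++ rev (y :: jj)) =
  [&& all (ltn x) (ii ++ rev jj), x < y, all (fun z => z < y) (ii ++ rev jj) & sorted ltn (ii ++ rev jj)].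
Proof.
rewrite rev_cons cat_cons -rcons_cat /= path_sortedE; last exact: ltn_trans.
by rewrite all_rcons sorted_rcons_ltn /= (andbC (x < y)) -!andbA.
Qed.

Lemma nest_sorted ii jj : size ii = size jj -> sorted ltn (ii ++ rev jj) <-> nest ii jj.
Proof.
elim: ii jj => [|x ii IH] [|y jj] // hs.
case: hs => /IH hs.
rewrite sorted_cons2; split.
  case/and4P => h1 h2 h3 h4; split => //; split; last by apply/hs.
  move=> z hz; have hz' : z \in ii ++ rev jj by rewrite mem_cat mem_rev -mem_cat.
  by apply/andP; split; [exact: (allP h1 _ hz') | exact: (allP h3 _ hz')].
case=> h1 [h2 h3]; apply/and4P; split => //; last by apply/hs.
  by apply/allP => z; rewrite mem_cat mem_rev -mem_cat => /h2 /andP [].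
by apply/allP => z; rewrite mem_cat mem_rev -mem_cat => /h2 /andP [].
Qed.

Lemma nest_size ii jj : nest ii jj -> size ii = size jj.
Proof. by elim: ii jj => [|x ii IH] [|y jj] //= [_ [_ /IH ->]]. Qed.

Lemma mem_zip2 (ii jj : seq nat) p : p \in zip ii jj -> p.1 \in ii /\ p.2 \in jj.
Proof.
elim: ii jj => [|x ii IH] [|y jj] //=; rewrite in_cons => /orP [/eqP -> | /IH [h1 h2]].
  by rewrite !in_cons !eqxx.
by rewrite !in_cons h1 h2 !orbT.
Qed.

Lemma nest_zip ii jj : nest ii jj -> forall p, p \in zip ii jj ->
  [/\ p.1 \in ii, p.2 \in jj & (p.1 < p.2)%N].
Proof.
elim: ii jj => [|x ii IH] [|y jj] //= [h1 [h2 h3]] p.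
rewrite in_cons => /orP [/eqP -> | hp]; first by rewrite /= !in_cons !eqxx.
have [a b c] := IH _ h3 _ hp.
by rewrite !in_cons a b c !orbT.
Qed.

Lemma nest_pair ii jj : nest ii jj -> forall p q, p \in zip ii jj -> q \in zip ii jj ->
  p = q \/ (p.1 < q.1 /\ q.2 < p.2)%N \/ (q.1 < p.1 /\ p.2 < q.2)%N.
Proof.
elim: ii jj => [|x ii IH] [|y jj] //= [h1 [h2 h3]] p q.
have hin r : r \in zip ii jj -> (x < r.1 < y)%N /\ (x < r.2 < y)%N.
  move=> hr; have [a b _] := nest_zip h3 hr.
  by split; apply: h2; rewrite mem_cat ?a ?b ?orbT.
rewrite !in_cons => /orP [/eqP -> | hp] /orP [/eqP -> | hq].
- by left.
- have [/andP [a1 a2] /andP [b1 b2]] := hin _ hq; by right; left.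
- have [/andP [a1 a2] /andP [b1 b2]] := hin _ hp; by right; right.
- exact: (IH _ h3 _ _ hp hq).
Qed.

Lemma nest_head x y ii jj : nest (x :: ii) (y :: jj) -> forall p, p \in zip (x :: ii) (y :: jj) ->
  (x <= p.1)%N /\ (p.2 <= y)%N.
Proof.
move=> /= [h1 [h2 h3]] p; rewrite in_cons => /orP [/eqP -> | hp] //.
have [a b _] := nest_zip h3 hp.
have /andP [a1 a2] : (x < p.1 < y)%N by apply: h2; rewrite mem_cat a.
have /andP [b1 b2] : (x < p.2 < y)%N by apply: h2; rewrite mem_cat b orbT.
by rewrite ltnW // ltnW.
Qed.

Lemma nest_uniq ii jj : nest ii jj -> uniq (zip ii jj).
Proof.
elim: ii jj => [|x ii IH] [|y jj] //= [h1 [h2 h3]]; rewrite IH // andbT.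
apply/negP => hp; have [a _ _] := nest_zip h3 hp.
have := h2 x; rewrite mem_cat a /= => /(_ isT); by rewrite ltnn.
Qed.
Lemma cond11_cons n (J : {set 'I_n}) x y ii jj :
  cond11 J (x :: ii) (y :: jj) = [&& ~~ inJ J x, ~~ inJ J y & cond11 J ii jj].
Proof.
rewrite /cond11 /= !all_cat /=.
by case: (inJ J x); case: (inJ J y); case: (all _ ii); case: (all _ jj).
Qed.

Lemma cond12_cons n (J : {set 'I_n}) s x y ii jj : (0 < s)%N -> size ii = s -> size jj = s ->
  cond12 J s ii jj -> ~~ inJ J x -> ~~ inJ J y -> cond12 J s.+1 (x :: ii) (y :: jj).
Proof.
case: s => // s _; case: ii => // a ii; case: jj => // b jj _ _.
rewrite /cond12 /= => /and4P [h1 h2 h3 h4] hx hy.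
by rewrite cond11_cons h1 hx hy h2 h3 h4.
Qed.

Lemma build n (J : {set 'I_n}) s : forall lo hi (B : seq (vec n)), (hi <= n.+1)%N ->
  uniq B -> size B = s ->
  (forall b, b \in B -> exists i j, [/\ b = beta n i j, (lo < i)%N, (i < j)%N, (j < hi)%N &
        ~~ inJ J j /\ (inJ J i -> j = i.+1)]) ->
  (forall a b, a \in B -> b \in B -> a != b -> ~~ rle a b) ->
  exists ii jj, [/\ nest ii jj, size ii = s, (forall z, z \in ii ++ jj -> (lo < z < hi)%N),
     B =i betas n ii jj & cond11 J ii jj \/ cond12 J s ii jj].
Proof.
elim: s => [|s IH] lo hi B hhi uB sB HB HA.
  move/size0nil: sB => ->; exists [::], [::]; split => //; by left.
pose P m := has (fun b => has (fun y => [&& (lo < m)%N, (m < y)%N & b == beta n m y]) (iota 0 hi)) B.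
have exP : exists m, P m.
  have [b hb] : exists b, b \in B by case: (B) sB => // b' ? _; exists b'; exact: mem_head.
  have [i [j [Eb h1 h2 h3 _]]] := HB b hb.
  exists i; apply/hasP; exists b => //; rewrite Eb.
  apply/hasP; exists j; first by rewrite mem_iota add0n h3.
  by rewrite h1 h2 eqxx.
case: (ex_minnP exP) => m Pm Hmin.
case/hasP: Pm => b0 hb0 /hasP [j0 hj0 /and3P [hlo hmj /eqP E0]].
move: hj0; rewrite mem_iota add0n => /andP [_ hj0].
have [i [j [Eb h1 h2 h3 [hJj hJi]]]] := HB _ hb0.
have [ei ej] : m = i /\ j0 = j.
  apply: (@beta_inj n); try arith; by rewrite -E0 -Eb.
subst i j.
have Hin b : b \in B -> b != b0 -> exists i j, [/\ b = beta n i j, (m < i)%N, (i < j)%N, (j < j0)%N &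
        ~~ inJ J j /\ (inJ J i -> j = i.+1)].
  move=> hb hne; have [i [j [Eb' g1 g2 g3 g4]]] := HB _ hb.
  have Pi : P i.
    apply/hasP; exists b => //; apply/hasP; exists j; first by rewrite mem_iota add0n g3.
    by rewrite g1 g2 Eb' eqxx.
  have hmi := Hmin _ Pi.
  exists i, j; split => //.
    rewrite ltn_neqAle hmi andbT; apply/eqP => emi; subst i.
    case: (leqP j0 j) => hj.
      by move: (HA _ _ hb hb0 hne); rewrite Eb' E0 rle_bb.
    by move: (HA _ _ hb0 hb (negbT (introF eqP (fun e => (negP hne) (introT eqP (esym e)))))); rewrite Eb' E0 rle_bb // ltnW.
  rewrite ltnNge; apply/negP => hj.
  by move: (HA _ _ hb hb0 hne); rewrite Eb' E0 rle_bb.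
have uB' : uniq (rem b0 B) by exact: rem_uniq.
have memB' b : (b \in rem b0 B) = (b != b0) && (b \in B) by rewrite mem_rem_uniq.
have sB' : size (rem b0 B) = s by rewrite size_rem // sB.
have HB' : forall b, b \in rem b0 B -> exists i j, [/\ b = beta n i j, (m < i)%N, (i < j)%N, (j < j0)%N &
        ~~ inJ J j /\ (inJ J i -> j = i.+1)].
  by move=> b; rewrite memB' => /andP [hne hb]; exact: Hin.
have HA' : forall a b, a \in rem b0 B -> b \in rem b0 B -> a != b -> ~~ rle a b.
  by move=> a b; rewrite !memB' => /andP [_ ha] /andP [_ hb]; exact: HA.
have [ii [jj [N1 N2 N3 N4 N5]]] := IH m j0 (rem b0 B) (leq_trans (ltnW hj0) hhi) uB' sB' HB' HA'.
exists (m :: ii), (j0 :: jj); split.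
- split; first exact: hmj. split; last exact: N1. move=> z hz; exact: N3.
- by rewrite /= N2.
- move=> z; rewrite in_cons mem_cat in_cons => /or3P [/eqP -> | hz | /orP [/eqP -> | hz]].
  + by rewrite hlo (ltn_trans hmj hj0).
  + have /andP [z1 z2] : (m < z < j0)%N by apply: N3; rewrite mem_cat hz.
    by rewrite (ltn_trans hlo z1) (ltn_trans z2 hj0).
  + by rewrite hj0 (ltn_trans hlo hmj).
  + have /andP [z1 z2] : (m < z < j0)%N by apply: N3; rewrite mem_cat hz orbT.
    by rewrite (ltn_trans hlo z1) (ltn_trans z2 hj0).
- move=> b; rewrite in_cons -N4 memB' -E0.
  case: (eqVneq b b0) => [->|] //=; by rewrite hb0.
- have sjj : size jj = s by rewrite -(nest_size N1).
  case: s IH sB sB' HB' HA' N2 N5 sjj => [|s] IH sB sB' HB' HA' N2 N5 sjj.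
    move/size0nil: N2 => ->; move/size0nil: sjj => ->.
    case: (boolP (inJ J m)) => hm.
      by right; rewrite /cond12 /= hm -(hJi hm) eqxx hJj.
    by left; rewrite cond11_cons hm hJj.
  have hm : ~~ inJ J m.
    apply/negP => /hJi ej; case: ii N1 N2 N3 N4 N5 => // z ii _ _ N3 _ _.
    have /andP [z1 z2] : (m < z < j0)%N by apply: N3; rewrite mem_head.
    by move: z2; rewrite ej ltnS leqNgt z1.
  case: N5 => N5.
    by left; rewrite cond11_cons hm hJj N5.
  by right; apply: cond12_cons.
Qed.

Lemma notinJ n (J : {set 'I_n}) x (k : 'I_n) : ~~ inJ J x -> k.+1 = x -> k \notin J.
Proof.
move=> h hk; apply/negP => kJ; move/negP: h; apply; apply/existsP; exists k.
by rewrite kJ hk eqxx.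
Qed.

Lemma inJ_of n (J : {set 'I_n}) x (k : 'I_n) : k \in J -> k.+1 = x -> inJ J x.
Proof. by move=> kJ hk; apply/existsP; exists k; rewrite kJ hk eqxx. Qed.

Lemma not_inRJ n (J : {set 'I_n}) (a : vec n) (k : 'I_n) : k \notin J -> a k != 0 -> ~~ inRJ J a.
Proof.
move=> kJ ak; rewrite /inRJ; apply/negP => /andP [_ /forallP /(_ k)].
by rewrite kJ /= (negbTE ak).
Qed.

Lemma mem_betas n ii jj (a : vec n) : a \in betas n ii jj -> exists p, p \in zip ii jj /\ a = beta n p.1 p.2.
Proof. by case/mapP => p hp ->; exists p. Qed.

Lemma Phi_mem n (A : seq (vec n)) b : b \in Phi A -> exists2 a, a \in A & rle a b.
Proof. by rewrite mem_filter => /andP [/hasP [a ha hr] _]; exists a. Qed.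

Lemma alpha_minus n (J : {set 'I_n}) l (m : 'I_n) : (1 <= l)%N -> (l <= n)%N ->
  ~~ inJ J 1 -> ~~ inJ J l -> m \in J -> (alpha n 1 l - simple m)%R \notin roots n.
Proof.
move=> hl1 hln hJ1 hJl mJ; apply/negP => hr.
have hm1 : m.+1 <> 1%N by move=> e; move: hJ1; rewrite (inJ_of mJ e).
have hml : m.+1 <> l by move=> e; move: hJl; rewrite (inJ_of mJ e).
have [k1 hk1] : exists k : 'I_n, k.+1 = 1%N by apply: ex_ord; arith.
have [kl hkl] : exists k : 'I_n, k.+1 = l by apply: ex_ord; arith.
case: (ltngtP m.+1 l) => hx; last by [].
- apply: (root_gap (x:=k1) (y:=m) (z:=kl) hr); rewrite ?ffunE; crunch.
- apply: (root_mixed (x:=k1) (y:=m) hr); rewrite ?ffunE; crunch.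
Qed.

Lemma beta_minus n (J : {set 'I_n}) i j (m : 'I_n) : (1 <= i)%N -> (i < j)%N -> (j <= n)%N ->
  ~~ inJ J j -> (inJ J i -> j = i.+1) -> m \in J -> (beta n i j - simple m)%R \notin roots n.
Proof.
move=> hi hij hjn hJj hJi mJ; apply/negP => hr.
have hmj : m.+1 <> j by move=> e; move: hJj; rewrite (inJ_of mJ e).
have [ki hki] : exists k : 'I_n, k.+1 = i by apply: ex_ord; arith.
have [kj hkj] : exists k : 'I_n, k.+1 = j by apply: ex_ord; arith.
have [kn hkn] : exists k : 'I_n, k.+1 = n by apply: ex_ord; arith.
case: (ltngtP m.+1 i) => hx.
- apply: (root_mixed (x:=kn) (y:=m) hr); rewrite ?ffunE; crunch.
- case: (ltngtP m.+1 j) => hy; last by [].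
    apply: (root_gap (x:=ki) (y:=m) (z:=kn) hr); rewrite ?ffunE; crunch.
  apply: (root_two (x:=kj) (y:=m) hr); rewrite ?ffunE; crunch.
- have ej := hJi (inJ_of mJ hx).
  apply: (root_jump (x:=m) (y:=kj) hr); rewrite ?ffunE; crunch.
Qed.

Lemma good_AsJ n (J : {set 'I_n}) (lopt : option nat) ii jj (A : seq (vec n)) :
  (1 <= n)%N -> nest ii jj ->
  (forall p, p \in zip ii jj -> [/\ (1 <= p.1)%N, (p.2 <= n)%N, ~~ inJ J p.2 & (inJ J p.1 -> p.2 = p.1.+1)]) ->
  (forall l, lopt = Some l -> [/\ (1 <= l)%N, (l <= n)%N, ~~ inJ J 1, ~~ inJ J l &
       forall p, p \in zip ii jj -> (1 < p.1)%N /\ (p.2 <= l)%N]) ->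
  A =i (if lopt is Some l then alpha n 1 l :: betas n ii jj else betas n ii jj) ->
  J_antichain J A /\ abelian_set A.
Proof.
move=> hn N HP HL EA.
have HA a : a \in A -> (exists2 l, lopt = Some l & a = alpha n 1 l) \/
                       (exists2 p, p \in zip ii jj & a = beta n p.1 p.2).
  rewrite EA; case: lopt {HL EA} => [l|].
    rewrite in_cons => /orP [/eqP ->|/mem_betas [p [hp ->]]]; [by left; exists l|by right; exists p].
  by move/mem_betas => [p [hp ->]]; right; exists p.
have Hp p : p \in zip ii jj -> (p.1 < p.2)%N by case/(nest_zip N).
have [k1 hk1] : exists k : 'I_n, k.+1 = 1%N by apply: ex_ord; arith.
have [kn hkn] : exists k : 'I_n, k.+1 = n by apply: ex_ord; arith.
split; first split.
- move=> a /HA [[l /HL [h1 h2 _ _ _] ->]|[p hp ->]]; first exact: alpha_pos.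
  by have [h1 h2 _ _] := HP _ hp; apply: beta_pos => //; apply: Hp.
- move=> a /HA [[l /HL [h1 h2 h3 _ _] ->]|[p hp ->]].
    apply: (not_inRJ (k := k1)); first exact: notinJ h3 hk1.
    rewrite alphaE hk1 /= h1 //.
  have [h1 h2 h3 _] := HP _ hp.
  have hpp := Hp _ hp.
  have [kj hkj] : exists k : 'I_n, k.+1 = p.2 by apply: ex_ord; arith.
  apply: (not_inRJ (k := kj)); first exact: notinJ h3 hkj.
  rewrite betaE hkj leqnn (ltnW hpp) //.
- move=> a b /HA [[l el ->]|[p hp ->]] /HA [[l' el' ->]|[q hq ->]] hne.
  + by move: hne; rewrite el in el'; case: el' => ->; rewrite eqxx.
  + have [h1 h2 _ _ /(_ _ hq) [q1 q2]] := HL _ el.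
    by apply: nrle_ab => //; apply: Hp.
  + have [h1 h2 _ _ /(_ _ hp) [p1 p2]] := HL _ el'.
    by apply: nrle_ba => //; [apply: Hp | have [] := HP _ hp].
  + have [p1 p2 _ _] := HP _ hp; have [q1 q2 _ _] := HP _ hq.
    case: (nest_pair N hp hq) => [epq|[[a1 a2]|[a1 a2]]].
    * by move: hne; rewrite epq eqxx.
    * by apply: nrle_bb1 => //; apply: Hp.
    * by apply: nrle_bb2 => //; apply: Hp.
- move=> a j /HA [[l /HL [h1 h2 h3 h4 _] ->]|[p hp ->]] hj.
    apply: (alpha_minus h1 h2 h3 h4 hj).
  have [p1 p2 p3 p4] := HP _ hp.
  exact: (beta_minus p1 (Hp _ hp) p2 p3 p4 hj).
- move=> b1 b2 /Phi_mem [a1 ha1 r1] /Phi_mem [a2 ha2 r2]; apply/negP => hr.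
  have hk10 : k1 = 0%N :> nat by case: hk1.
  case: (HA _ ha1) => [[l el E1]|[p hp E1]]; case: (HA _ ha2) => [[l' el' E2]|[q hq E2]]; subst a1 a2.
  + move: el'; rewrite el => -[el']; subst l'.
    have [h1 _ _ _ _] := HL _ el.
    have g1 : (1 <= b1 k1)%R by apply: (dom_a r1); rewrite hk1.
    have g2 : (1 <= b2 k1)%R by apply: (dom_a r2); rewrite hk1.
    have g3 := root_first hk10 hr; rewrite ffunE in g3.
    by have := le_trans (lerD g1 g2) g3.
  + have [h1 h2 _ _ /(_ _ hq) [q1 q2]] := HL _ el.
    have hqq := Hp _ hq.
    have [kq hkq] : exists k : 'I_n, k.+1 = q.2 by apply: ex_ord; arith.
    have g1 : (1 <= b1 kq)%R by apply: (dom_a r1); rewrite hkq.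
    have g2 : (2 <= b2 kq)%R by apply: (dom_b r2); rewrite ?hkq //; apply: hqq.
    have g3 := root_le2 kq hr; rewrite ffunE in g3.
    by have := le_trans (lerD g1 g2) g3.
  + have [h1 h2 _ _ /(_ _ hp) [q1 q2]] := HL _ el'.
    have hpp := Hp _ hp.
    have [kq hkq] : exists k : 'I_n, k.+1 = p.2 by apply: ex_ord; arith.
    have g2 : (1 <= b2 kq)%R by apply: (dom_a r2); rewrite hkq.
    have g1 : (2 <= b1 kq)%R by apply: (dom_b r1); rewrite ?hkq //; apply: hpp.
    have g3 := root_le2 kq hr; rewrite ffunE in g3.
    by have := le_trans (lerD g1 g2) g3.
  + have [_ p2 _ _] := HP _ hp; have [_ q2 _ _] := HP _ hq.
    have g1 : (2 <= b1 kn)%R by apply: (dom_b r1); rewrite ?hkn //; apply: (Hp _ hp).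
    have g2 : (2 <= b2 kn)%R by apply: (dom_b r2); rewrite ?hkn //; apply: (Hp _ hq).
    have g3 := root_le2 kn hr; rewrite ffunE in g3.
    by have := le_trans (lerD g1 g2) g3.
Qed.

Lemma chain1_nest n s ii jj : chain1 n s ii jj ->
  [/\ size ii = s, size jj = s, nest ii jj & forall z, z \in ii ++ jj -> (1 <= z)%N && (z <= n)%N].
Proof.
case/and4P => /eqP h1 /eqP h2 h3 /allP h4; split => //.
by apply/nest_sorted => //; rewrite h1 h2.
Qed.

Lemma nest_chain1 n s ii jj : nest ii jj -> size ii = s ->
  (forall z, z \in ii ++ jj -> (1 <= z)%N && (z <= n)%N) -> chain1 n s ii jj.
Proof.
move=> N h1 h2; have h3 := nest_size N.
apply/and4P; split; [by rewrite h1|by rewrite -h3 h1| |by apply/allP].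
exact/nest_sorted.
Qed.

Lemma cond_pairs n (J : {set 'I_n}) s ii jj : nest ii jj -> size ii = s ->
  cond11 J ii jj \/ cond12 J s ii jj ->
  forall p, p \in zip ii jj -> ~~ inJ J p.2 /\ (inJ J p.1 -> p.2 = p.1.+1).
Proof.
move=> N hs C p hp.
have hs' : size jj = s by rewrite -(nest_size N).
case: C => C.
  have [a b] := mem_zip2 hp.
  move: C; rewrite /cond11 all_cat => /andP [/allP /(_ _ a) c1 /allP /(_ _ b) c2].
  by split => // c; move: c1; rewrite c.
case: s hs hs' C => [|s] hs hs'; first by rewrite /cond12.
case/lastP: ii hs N hp => [|ii a] //; case/lastP: jj hs' => [|jj b] //.
rewrite !size_rcons => -[hs'] [hs] N.
rewrite zip_rcons ?hs ?hs' // mem_rcons in_cons => hp.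
rewrite /cond12 /= -!cats1 !last_cat /= -hs take_size_cat // hs -hs' take_size_cat //.
case/and4P => c1 c2 /eqP c3 c4.
case/orP: hp => [/eqP -> | hp] /=; first by split => // _.
have [x y] := mem_zip2 hp.
move: c1; rewrite /cond11 all_cat => /andP [/allP /(_ _ x) e1 /allP /(_ _ y) e2].
by split => // c; move: e1; rewrite c.
Qed.

Lemma cond12_last n (J : {set 'I_n}) s ii jj : size ii = s -> size jj = s ->
  cond12 J s ii jj -> exists a b, (a, b) \in zip ii jj /\ inJ J a.
Proof.
case: s => [|s] hs hs'; first by rewrite /cond12.
case/lastP: ii hs => [|ii a] //; case/lastP: jj hs' => [|jj b] //.
rewrite !size_rcons => -[hs'] [hs].
rewrite /cond12 /= -!cats1 !last_cat /= => /and4P [_ c2 _ _].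
exists a, b; split => //.
by rewrite !cats1 zip_rcons ?hs ?hs' // mem_rcons mem_head.
Qed.

Lemma uniq_betas n ii jj : nest ii jj -> (forall z, z \in ii ++ jj -> (1 <= z)%N && (z <= n)%N) ->
  uniq (betas n ii jj).
Proof.
move=> N B; rewrite /betas map_inj_in_uniq; first exact: nest_uniq.
move=> [x y] [x' y'] hp hq /= E.
have [a b c] := nest_zip N hp; have [a' b' c'] := nest_zip N hq.
have /andP [a1 a2] : (1 <= x)%N && (x <= n)%N by apply: B; rewrite mem_cat a.
have /andP [b1 b2] : (1 <= y)%N && (y <= n)%N by apply: B; rewrite mem_cat b orbT.
have /andP [a1' a2'] : (1 <= x')%N && (x' <= n)%N by apply: B; rewrite mem_cat a'.
have /andP [b1' b2'] : (1 <= y')%N && (y' <= n)%N by apply: B; rewrite mem_cat b' orbT.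
have [e1 e2] := beta_inj a1 c b2 a1' c' b2' E; simpl in e1, e2; by rewrite e1 e2.
Qed.

Lemma Phi_in n (A : seq (vec n)) a x : a \in A -> x \in posroots n -> rle a x -> x \in Phi A.
Proof. by move=> ha hx hr; rewrite mem_filter hx andbT; apply/hasP; exists a. Qed.

Lemma rle_refl n (a : vec n) : rle a a.
Proof. by apply/forallP => k; rewrite lexx. Qed.

Lemma size_betas n ii jj : size ii = size jj -> size (betas n ii jj) = size ii.
Proof. by move=> h; rewrite size_map size_zip h minnn. Qed.

Lemma back1 n (J : {set 'I_n}) s (A : seq (vec n)) : (1 <= n)%N -> uniq A ->
  (exists ii jj, [/\ chain1 n s ii jj, A =i betas n ii jj & cond11 J ii jj \/ cond12 J s ii jj]) ->
  inAsJ J s A.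
Proof.
move=> hn uA [ii [jj [C E K]]].
have [s1 s2 N B] := chain1_nest C.
have P := cond_pairs N s1 K.
have HP : forall p, p \in zip ii jj -> [/\ (1 <= p.1)%N, (p.2 <= n)%N, ~~ inJ J p.2 & (inJ J p.1 -> p.2 = p.1.+1)].
  move=> p hp; have [a b] := mem_zip2 hp; have [c d] := P _ hp.
  have /andP [a1 _] := B _ (etrans (mem_cat _ _ _) (introT orP (or_introl a))).
  have /andP [_ b2] := B _ (etrans (mem_cat _ _ _) (introT orP (or_intror b))).
  by split.
have HL : forall l, (None : option nat) = Some l -> [/\ (1 <= l)%N, (l <= n)%N, ~~ inJ J 1, ~~ inJ J l &
       forall p, p \in zip ii jj -> (1 < p.1)%N /\ (p.2 <= l)%N] by [].
have [JA AB] := @good_AsJ n J None ii jj A hn N HP HL E.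
split => //.
by rewrite (perm_size (uniq_perm uA (uniq_betas N B) E)) size_betas // s1 s2.
Qed.

Lemma back2 n (J : {set 'I_n}) s (A : seq (vec n)) : (1 <= n)%N -> uniq A ->
  inA2J J s A -> inAsJ J s A.
Proof.
move=> hn uA [hJ1 [l [ii [jj [[hs /andP [hl1 hln] C H E] [hJl K]]]]]].
have [s1 s2 N B] := chain1_nest C.
have P := cond_pairs N s1 (orP K).
have HP : forall p, p \in zip ii jj -> [/\ (1 <= p.1)%N, (p.2 <= n)%N, ~~ inJ J p.2 & (inJ J p.1 -> p.2 = p.1.+1)].
  move=> p hp; have [a b] := mem_zip2 hp; have [c d] := P _ hp.
  have /andP [a1 _] := B _ (etrans (mem_cat _ _ _) (introT orP (or_introl a))).
  have /andP [_ b2] := B _ (etrans (mem_cat _ _ _) (introT orP (or_intror b))).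
  by split.
have HL : forall l0, Some l = Some l0 -> [/\ (1 <= l0)%N, (l0 <= n)%N, ~~ inJ J 1, ~~ inJ J l0 &
       forall p, p \in zip ii jj -> (1 < p.1)%N /\ (p.2 <= l0)%N].
  move=> l0 [<-]; split => // p.
  case: ii jj s1 s2 N H {C E P HP B K} => [|x ii] [|y jj] //= s1 s2 N H hp.
  rewrite -s1 /= in H; case/andP: H => h1 h2.
  have [g1 g2] := nest_head N hp.
  by split; [apply: leq_trans g1 | apply: leq_trans h2].
have [JA AB] := @good_AsJ n J (Some l) ii jj A hn N HP HL E.
split => //.
have uL : uniq (alpha n 1 l :: betas n ii jj).
  rewrite /= uniq_betas // andbT; apply/negP => /mem_betas [p [hp ep]].
  have [_ p2 _ _] := HP _ hp; have [_ _ p3] := nest_zip N hp.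
  by move: (alpha_ne_beta p3 p2 hln); rewrite ep eqxx.
rewrite (perm_size (uniq_perm uA uL E)) /= size_betas ?s1 ?s2 //.
by rewrite prednK.
Qed.

Lemma dis_1_2 n (J : {set 'I_n}) s (A : seq (vec n)) :
  inA11 J s A -> inA12 J s A -> False.
Proof.
move=> [ii [jj [C E K]]] [ii' [jj' [C' E' K']]].
have [s1 s2 N B] := chain1_nest C; have [s1' s2' N' B'] := chain1_nest C'.
have [a [b [hab ha]]] := cond12_last s1' s2' K'.
have : beta n a b \in A by rewrite E'; apply/mapP; exists (a, b).
rewrite E => /mem_betas [p [hp ep]].
have [x1 x2 x3] := nest_zip N hp; have [y1 y2 y3] := nest_zip N' hab.
have /andP [g1 _] : (1 <= p.1)%N && (p.1 <= n)%N by apply: B; rewrite mem_cat x1.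
have /andP [_ g2] : (1 <= p.2)%N && (p.2 <= n)%N by apply: B; rewrite mem_cat x2 orbT.
have /andP [h1 _] : (1 <= a)%N && (a <= n)%N by apply: B'; rewrite mem_cat y1.
have /andP [_ h2] : (1 <= b)%N && (b <= n)%N by apply: B'; rewrite mem_cat y2 orbT.
have [e1 _] := beta_inj h1 y3 h2 g1 x3 g2 ep.
move: K; rewrite /cond11 all_cat => /andP [/allP /(_ _ x1)]; by rewrite -e1 ha.
Qed.

Lemma dis_x_2 n (J : {set 'I_n}) s (A : seq (vec n)) :
  (exists ii jj, chain1 n s ii jj /\ A =i betas n ii jj) -> inA2J J s A -> False.
Proof.
move=> [ii [jj [C E]]] [_ [l [ii' [jj' [[_ /andP [_ hln] _ _ E'] _]]]]].
have : alpha n 1 l \in A by rewrite E' mem_head.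
rewrite E => /mem_betas [p [hp ep]].
have [s1 s2 N B] := chain1_nest C.
have [x1 x2 x3] := nest_zip N hp.
have /andP [_ g2] : (1 <= p.2)%N && (p.2 <= n)%N by apply: B; rewrite mem_cat x2 orbT.
by move: (alpha_ne_beta x3 g2 hln); rewrite ep eqxx.
Qed.

Lemma classify n (J : {set 'I_n}) (A : seq (vec n)) : J_antichain J A -> abelian_set A ->
  forall a, a \in A ->
  (exists l, [/\ a = alpha n 1 l, (1 <= l)%N, (l <= n)%N, ~~ inJ J 1 & ~~ inJ J l]) \/
  (exists i j, [/\ a = beta n i j, (1 <= i)%N, (i < j)%N, (j <= n)%N & ~~ inJ J j /\ (inJ J i -> j = i.+1)]).
Proof.
move=> [Hsub HRJ Hanti Hmin] Hab a ha.
have := Hsub a ha; case/posrootsP => [[i [j [h1 h2 h3 Ea]]]|[i [j [h1 h2 h3 Ea]]]]; subst a.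
- have hi1 : i = 1%N.
    case: (ltngtP i 1) => // hi; first by move: h1; rewrite leqNgt hi.
    case: (ltngtP j n) => hj; last 1 first.
    + subst j; exfalso.
      have hx : alpha n 1 n \in Phi A by apply: (Phi_in ha); [apply: alpha_pos; arith|apply: rle_aa; arith].
      have hy : alpha n i n \in Phi A by apply: (Phi_in ha); [apply: alpha_pos; arith|apply: rle_refl; arith].
      move: (Hab _ _ hx hy); rewrite -/(beta n 1 i) => /negP; apply.
      by apply: pos_roots; apply: beta_pos.
    + exfalso.
      have hx : alpha n 1 j \in Phi A by apply: (Phi_in ha); [apply: alpha_pos; arith|apply: rle_aa; arith].
      have hy : beta n i j.+1 \in Phi A by apply: (Phi_in ha); [apply: beta_pos; arith|apply: rle_ab; arith].
      move: (Hab _ _ hx hy); rewrite W1 // => /negP; apply.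
      by apply: pos_roots; apply: beta_pos => //; apply: leq_trans h2 h3.
    + by move: h3; rewrite leqNgt hj.
  subst i; left; exists j.
  have hJ1 : ~~ inJ J 1.
    apply/negP => /existsP [k /andP [kJ /eqP hk]].
    case: (ltngtP j 1) => hj.
    + by move: h2; rewrite leqNgt hj.
    + have := Hmin _ k ha kJ; rewrite W7 // => /negP; apply.
      by apply: pos_roots; apply: alpha_pos.
    + subst j; move: (HRJ _ ha) => /negP; apply.
      rewrite /inRJ (Hsub _ ha) /=; apply/forallP => x; apply/implyP => xJ.
      rewrite alphaE; case: ifP => // /andP [x1 x2].
      have exk : x = k by apply: val_inj; apply/eqP; rewrite -eqSS hk eqn_leq x1 x2.
      by move: xJ; rewrite exk kJ.
  have hJl : ~~ inJ J j.
    apply/negP => /existsP [k /andP [kJ /eqP hk]].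
    case: j h2 h3 hk ha => [|[|j]] // h2 h3 hk ha.
      by move: hJ1; rewrite (inJ_of kJ hk).
    have := Hmin _ k ha kJ; rewrite W8 // => /negP; apply.
    by apply: pos_roots; apply: alpha_pos => //; apply: ltnW.
  by split.
- right; exists i, j; split => //; split.
    apply/negP => /existsP [k /andP [kJ /eqP hk]].
    case: (ltngtP j n) => hj.
    + have := Hmin _ k ha kJ; rewrite W4 // => /negP; apply.
      by apply: pos_roots; apply: beta_pos => //; apply: ltnW.
    + by move: h3; rewrite leqNgt hj.
    + rewrite hj in ha h2 h3 hk; have := Hmin _ k ha kJ; rewrite W5 // => /negP; apply.
      by apply: pos_roots; apply: alpha_pos => //; apply: ltnW.
  move=> /existsP [k /andP [kJ /eqP hk]].
  case: (ltngtP j i.+1) => hj //.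
    by move: h2; rewrite leqNgt ltnS -ltnS hj.
  exfalso; have := Hmin _ k ha kJ; rewrite W6 // => /negP; apply.
  by apply: pos_roots; apply: beta_pos.
Qed.

Lemma forward n (J : {set 'I_n}) s (A : seq (vec n)) : (1 <= s)%N -> (1 <= n)%N ->
  inAsJ J s A -> [\/ inA11 J s A, inA12 J s A | inA2J J s A].
Proof.
move=> hs hn [uA sA JA Hab].
have CL := classify JA Hab.
case: JA => Hsub HRJ Hanti Hmin.
pose isal (a : vec n) := has (fun l => a == alpha n 1 l) (iota 1 n).
case: (boolP (has isal A)) => hal.
- case/hasP: hal => a0 ha0 /hasP [l0 hl0 /eqP e0].
  have [[l [El hl1 hln hJ1 hJl]]|[i [j [Eb _ hij hjn _]]]] := CL _ ha0; last first.
    have hl0n : (l0 <= n)%N by move: hl0; rewrite mem_iota add1n ltnS => /andP [].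
    by move: (alpha_ne_beta hij hjn hl0n); rewrite -e0 Eb eqxx.
  clear l0 hl0 e0.
  have memB b : (b \in rem a0 A) = (b != a0) && (b \in A) by rewrite mem_rem_uniq.
  have HB : forall b, b \in rem a0 A -> exists i j, [/\ b = beta n i j, (1 < i)%N, (i < j)%N, (j < l.+1)%N &
        ~~ inJ J j /\ (inJ J i -> j = i.+1)].
    move=> b; rewrite memB => /andP [hne hb].
    have [[l' [El' h1 h2 _ _]]|[i [j [Eb h1 h2 h3 h4]]]] := CL _ hb.
      exfalso; case: (leqP l l') => hll.
        by move: (Hanti _ _ ha0 hb (negbT (introF eqP (fun e => negP hne (introT eqP (esym e)))))); rewrite El El' rle_aa.
      by move: (Hanti _ _ hb ha0 hne); rewrite El El' rle_aa // ltnW.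
    exists i, j; split => //.
      rewrite ltn_neqAle h1 andbT; apply/eqP => ei; subst i.
      by move: (Hanti _ _ ha0 hb (negbT (introF eqP (fun e => negP hne (introT eqP (esym e)))))); rewrite El Eb rle_a1b1.
    rewrite ltnS leqNgt; apply/negP => hlj; exfalso.
    case: j hlj h2 h3 Eb h4 => // p hlj h2 h3 Eb h4.
    have hi1 : (1 < i)%N.
      rewrite ltn_neqAle h1 andbT; apply/eqP => ei; subst i.
      by move: (Hanti _ _ ha0 hb (negbT (introF eqP (fun e => negP hne (introT eqP (esym e)))))); rewrite El Eb rle_a1b1.
    have hx : alpha n 1 p \in Phi A.
      by apply: (Phi_in ha0); [apply: alpha_pos; arith | rewrite El; apply: rle_aa; arith].
    have hy : b \in Phi A by apply: (Phi_in hb); [rewrite Eb; apply: beta_pos; arith | apply: rle_refl].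
    move: (Hab _ _ hx hy); rewrite Eb W1 //; try arith.
    by move=> /negP; apply; apply: pos_roots; apply: beta_pos; arith.
  have HA' : forall a b, a \in rem a0 A -> b \in rem a0 A -> a != b -> ~~ rle a b.
    by move=> a b; rewrite !memB => /andP [_ ha] /andP [_ hb]; exact: Hanti.
  have hhi : (l.+1 <= n.+1)%N by [].
  have sB : size (rem a0 A) = s.-1 by rewrite size_rem // sA.
  have [ii [jj [N s1 Bd E K]]] := build hhi (rem_uniq a0 uA) sB HB HA'.
  apply: Or33; split => //; exists l, ii, jj; split; last first.
    by split => //; apply/orP.
  split => //.
  - by rewrite hl1.
  - apply: nest_chain1 => // z /Bd /andP [z1 z2].
    by rewrite ltnW // -ltnS (leq_trans z2) // ltnS.
  - apply/implyP => hs1.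
    have s2 := nest_size N.
    case: ii jj s1 s2 N Bd E K => [|x ii] [|y jj] //= s1 s2 N Bd E K; try by rewrite -s1 in hs1.
    have /andP [x1 _] : (1 < x < l.+1)%N by apply: Bd; rewrite mem_head.
    have /andP [_ y2] : (1 < y < l.+1)%N by apply: Bd; rewrite !(in_cons, mem_cat) eqxx !orbT.
    by rewrite x1 -ltnS.
  - move=> a; rewrite in_cons -E memB El.
    by case: (eqVneq a (alpha n 1 l)) => [->|] //=; rewrite -El ha0.
- have HB : forall b, b \in A -> exists i j, [/\ b = beta n i j, (0 < i)%N, (i < j)%N, (j < n.+1)%N &
        ~~ inJ J j /\ (inJ J i -> j = i.+1)].
    move=> b hb.
    have [[l [El h1 h2 _ _]]|[i [j [Eb h1 h2 h3 h4]]]] := CL _ hb; last by exists i, j; split.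
    move/hasPn: hal => /(_ _ hb); rewrite /isal => /hasPn /(_ l).
    by rewrite mem_iota add1n ltnS h1 h2 El eqxx => /(_ isT).
  have [ii [jj [N s1 Bd E K]]] := build (leqnn n.+1) uA sA HB Hanti.
  have C : chain1 n s ii jj.
    by apply: nest_chain1 => // z /Bd /andP [z1 z2]; rewrite z1 -ltnS.
  case: K => K; [apply: Or31 | apply: Or32]; by exists ii, jj.
Qed.

Theorem mainTheorem9 (n : nat) (J : {set 'I_n}) (s : nat) :
  (2 <= n)%N -> (1 <= s)%N ->
  (forall A : seq (vec n), uniq A ->
     inAsJ J s A <-> [\/ inA11 J s A, inA12 J s A | inA2J J s A]) /\
  (forall A : seq (vec n), ~ (inA11 J s A /\ inA12 J s A)) /\
  (forall A : seq (vec n), ~ (inA11 J s A /\ inA2J J s A)) /\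
  (forall A : seq (vec n), ~ (inA12 J s A /\ inA2J J s A)).
Proof.
move=> hn hs; have hn1 : (1 <= n)%N by apply: ltnW.
split; [|split; [|split]].
- move=> A uA; split; first exact: forward.
  case=> [[ii [jj [C E K]]]|[ii [jj [C E K]]]|h].
  + by apply: back1 => //; exists ii, jj; split => //; left.
  + by apply: back1 => //; exists ii, jj; split => //; right.
  + exact: back2.
- by move=> A [h1 h2]; apply: dis_1_2 h1 h2.
- move=> A [[ii [jj [C E _]]] h]; apply: (dis_x_2 _ h); by exists ii, jj.
- move=> A [[ii [jj [C E _]]] h]; apply: (dis_x_2 _ h); by exists ii, jj.
Qed.
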